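(* Let $G$ be a graph with vertex order $v_1,\ldots,v_n$, let $D$ be a minimal dominating set of $G$, let $u,w\in D$ be adjacent, let $v\in P_D(u)$, and let $X_{uv}$, $D^*$, $Z_{uv}$ be as in the context (so $D^*=((D\setminus\{u\})\cup X_{uv}\cup\{v\})\setminus Z_{uv}$). Then for every $z\in Z_{uv}$: (1) $z\notin N[X_{uv}\cup\{v\}]$; (2) $z$ has a neighbor in $D^*\setminus(X_{uv}\cup\{v\})$; (3) there is a vertex $x\in N[X_{uv}\cup\{v\}]\setminus N[u]$ adjacent to $z$ with $x\notin N[D^*\setminus(X_{uv}\cup\{v\})]$. Furthermore, for every $x\in N[X_{uv}\cup\{v\}]\setminus N[u]$ with $x\notin N[D^*\setminus(X_{uv}\cup\{v\})]$, there is $z\in Z_{uv}$ adjacent to $x$.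
   Context: Graphs are finite, simple, undirected; $N(x)$ is the open and $N[x]=N(x)\cup\{x\}$ the closed neighborhood, $N[S]=\bigcup_{x\in S}N[x]$. A dominating set is $D\subseteq V(G)$ with $N[D]=V(G)$; it is minimal if no proper subset is dominating. For a dominating set $D$ and $x\in D$, a vertex $y$ is private for $x$ if $y\in N[x]\setminus N[D\setminus\{x\}]$; $P_D[x]$ is the set of such $y$ and $P_D(x)=P_D[x]\cap N(x)$. Fix an order $v_1,\ldots,v_n$ of $V(G)$. Greedy removal from a dominating set $D'$: while the current set $S$ is not a minimal dominating set, remove from $S$ the vertex $v_i$ of smallest index $i$ such that $S\setminus\{v_i\}$ is still dominating. Given $D,u,v$: $X_{uv}$ is built by starting from $\emptyset$ and repeatedly adding the smallest-index vertex of $P_D(u)\setminus N[\{v\}\cup X_{uv}]$ while this set is nonempty. Let $D'=(D\setminus\{u\})\cup X_{uv}\cup\{v\}$, let $D^*$ be the result of greedy removal from $D'$, and $Z_{uv}=D'\setminus D^*$. *)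

(* Defs.v *)
(* Graph on vertex set 'I_n; the vertex order v_1,...,v_n is
   the natural order of 'I_n (v_{i+1} = i). *)
From mathcomp Require Import all_boot.
Set Implicit Arguments. Unset Strict Implicit. Unset Printing Implicit Defensive.

Section Dom.
Variables (n : nat) (e : rel 'I_n).

Definition onbh (x : 'I_n) : {set 'I_n} := [set y | e x y].
Definition cnbh (x : 'I_n) : {set 'I_n} := x |: onbh x.
Definition cnbhS (S : {set 'I_n}) : {set 'I_n} := \bigcup_(x in S) cnbh x.

Definition dominating (D : {set 'I_n}) : bool := cnbhS D == setT.
Definition minimal_dominating (D : {set 'I_n}) : Prop :=
  dominating D /\ forall D' : {set 'I_n}, D' \proper D -> ~~ dominating D'.
Definition minimal_dominatingb (D : {set 'I_n}) : bool :=
  dominating D && [forall D' : {set 'I_n}, (D' \proper D) ==> ~~ dominating D'].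

Definition priv (D : {set 'I_n}) (x : 'I_n) : {set 'I_n} :=
  cnbh x :\: cnbhS (D :\ x).
Definition privo (D : {set 'I_n}) (x : 'I_n) : {set 'I_n} :=
  priv D x :&: onbh x.

Definition minv (C : {set 'I_n}) : option 'I_n :=
  [pick y in C | [forall z in C, (val y <= val z)%N]].

(* construction of X_uv: repeatedly add the smallest-index vertex of
   P_D(u) \ N[{v} u X]; at most n additions, so n iterations suffice *)
Definition Xstep (D : {set 'I_n}) (u v : 'I_n) (X : {set 'I_n}) : {set 'I_n} :=
  if minv (privo D u :\: cnbhS (v |: X)) is Some y then y |: X else X.
Definition Xuv (D : {set 'I_n}) (u v : 'I_n) : {set 'I_n} :=
  iter n (Xstep D u v) set0.

Definition grstep (S : {set 'I_n}) : {set 'I_n} :=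
  if minimal_dominatingb S then S
  else if minv [set x in S | dominating (S :\ x)] is Some x then S :\ x else S.
Definition greedy (S : {set 'I_n}) : {set 'I_n} := iter n grstep S.

Definition Dprime (D : {set 'I_n}) (u v : 'I_n) : {set 'I_n} :=
  (D :\ u) :|: Xuv D u v :|: [set v].
Definition Dstar (D : {set 'I_n}) (u v : 'I_n) : {set 'I_n} :=
  greedy (Dprime D u v).
Definition Zuv (D : {set 'I_n}) (u v : 'I_n) : {set 'I_n} :=
  Dprime D u v :\: Dstar D u v.

End Dom.

(* Main.v *)
Require Import Defs.
From mathcomp Require Import all_boot.

Set Implicit Arguments. Unset Strict Implicit. Unset Printing Implicit Defensive.

Section Aux.
Variables (n : nat) (e : rel 'I_n).
Hypotheses (e_sym : symmetric e) (e_irr : irreflexive e).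

Lemma in_cnbh x y : (y \in cnbh e x) = (y == x) || e x y.
Proof. by rewrite /cnbh /onbh !inE. Qed.

Lemma cnbhSP (S : {set 'I_n}) y : reflect (exists2 x, x \in S & y \in cnbh e x) (y \in cnbhS e S).
Proof. exact: bigcupP. Qed.

Lemma domP (S : {set 'I_n}) : dominating e S -> forall y, y \in cnbhS e S.
Proof. by move/eqP => -> y; rewrite inE. Qed.

Lemma minv_in (C : {set 'I_n}) y : minv C = Some y -> y \in C.
Proof. by rewrite /minv; case: pickP => // x /andP[hx _] [<-]. Qed.

Lemma minv_set0 : minv (set0 : {set 'I_n}) = None.
Proof. by rewrite /minv; case: pickP => // x /andP[]; rewrite inE. Qed.

Lemma minv_some (C : {set 'I_n}) : C != set0 -> exists y, minv C = Some y.
Proof.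
case/set0Pn => y0 hy0; rewrite /minv; case: pickP => [x _|H]; first by eexists.
exfalso; case: (@arg_minnP _ y0 (mem C) val hy0) => m hm hmin.
move: (H m) => /negP; apply; apply/andP; split; first exact: hm.
apply/forallP => z; apply/implyP => hz; exact: hmin.
Qed.

Variables (D : {set 'I_n}) (u v : 'I_n).
Hypotheses (hD : minimal_dominating e D) (hu : u \in D)
  (hv : v \in privo e D u).

Lemma privoP y t : y \in privo e D u -> t \in D :\ u -> (y != t) && ~~ e t y.
Proof.
move=> /setIP [/setDP [_ hn] _] ht.
have : y \notin cnbh e t by apply: contra hn => hy; apply/cnbhSP; exists t.
by rewrite in_cnbh negb_or.
Qed.

Definition Xinv (X : {set 'I_n}) :=
  X \subset privo e D u /\ (forall a b, a \in v |: X -> b \in v |: X -> ~~ e a b).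

Lemma Xinv0 : Xinv set0.
Proof.
split; first exact: sub0set.
by move=> a b; rewrite setU0 !in_set1 => /eqP -> /eqP ->; rewrite e_irr.
Qed.

Lemma mem3 (a y : 'I_n) (X : {set 'I_n}) : a \in v |: (y |: X) -> a = y \/ a \in v |: X.
Proof.
rewrite !in_setU1; case: (a =P y) => [->|_]; first by left.
by move=> /= h; right.
Qed.

Lemma Xstep_inv (X : {set 'I_n}) : Xinv X -> Xinv (Xstep e D u v X).
Proof.
move=> [hs hi]; rewrite /Xstep; case E: minv => [y|]; last by split.
have := minv_in E; rewrite inE => /andP[hyN hyP].
split.
  apply/subsetP => t; rewrite in_setU1 => /predU1P [->|] //; exact: subsetP.
have nb a : a \in v |: X -> ~~ e a y.
  move=> ha; apply: contra hyN => hay; apply/cnbhSP; exists a => //.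
  by rewrite in_cnbh hay orbT.
move=> a b /mem3 [-> | ha] /mem3 [-> | hb].
- by rewrite e_irr.
- by rewrite e_sym; apply: nb.
- by apply: nb.
- by apply: hi.
Qed.

Lemma Xinv_iter k : Xinv (iter k (Xstep e D u v) set0).
Proof. elim: k => [|k IH]; [exact: Xinv0 | exact: Xstep_inv]. Qed.

Lemma XinvX : Xinv (Xuv e D u v).
Proof. exact: Xinv_iter. Qed.

Definition Pm (X : {set 'I_n}) := privo e D u :\: cnbhS e (v |: X).

Lemma Xiter_max k :
  Pm (iter k (Xstep e D u v) set0) = set0 \/ k <= #|iter k (Xstep e D u v) set0|.
Proof.
elim: k => [|k IH]; first by right.
rewrite iterS; set X := iter k _ _ in IH *.
case: (eqVneq (Pm X) set0) => [h|h].
  by left; rewrite /Xstep -/(Pm X) h minv_set0.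
case: IH => [h'|IH]; first by rewrite h' eqxx in h.
right; case: (minv_some h) => y E; rewrite /Xstep -/(Pm X) E.
have := minv_in E; rewrite inE => /andP[hyN _].
have hyX : y \notin X.
  apply: contra hyN => hy; apply/cnbhSP; exists y; first by rewrite in_setU1 hy orbT.
  by rewrite in_cnbh eqxx.
by rewrite cardsU1 hyX.
Qed.

Lemma Xmax t : t \in privo e D u -> t \in cnbhS e (v |: Xuv e D u v).
Proof.
move=> ht; case: (Xiter_max n) => [h|h].
  apply: contraT => hn; have : t \in Pm (Xuv e D u v) by rewrite inE hn ht.
  by rewrite /Xuv h inE.
have hX : Xuv e D u v = setT.
  by apply/eqP; rewrite eqEcard subsetT cardsT card_ord.
apply/cnbhSP; exists t; first by rewrite hX in_setU1 inE orbT.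
by rewrite in_cnbh eqxx.
Qed.

Lemma inD' t : (t \in Dprime e D u v) = (t \in D :\ u) || (t \in v |: Xuv e D u v).
Proof.
rewrite /Dprime !in_setU !in_set1.
by case: (t \in D :\ u); case: (t \in Xuv _ _ _ _); case: (t == v).
Qed.

Lemma Pprivo p : p \in v |: Xuv e D u v -> p \in privo e D u.
Proof.
rewrite in_setU1 => /predU1P [-> //|hp].
by case: XinvX => hs _; apply: (subsetP hs).
Qed.

Lemma D'dom : dominating e (Dprime e D u v).
Proof.
apply/eqP/setP => t; rewrite inE.
have hDd : dominating e D by case: hD.
case/cnbhSP: (domP hDd t) => d hd htd.
case: (eqVneq d u) => [edu|ndu].
  case: (boolP (t \in cnbhS e (D :\ u))) => [/cnbhSP [d' hd' htd']|hn].
    by apply/cnbhSP; exists d' => //; rewrite inD' hd'.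
  case: (eqVneq t u) => [etu|ntu].
    apply/cnbhSP; exists v; first by rewrite inD' in_setU1 eqxx orbT.
    move: hv => /setIP [_]; rewrite /onbh inE => huv.
    by rewrite in_cnbh etu e_sym huv orbT.
  have htp : t \in privo e D u.
    move: htd; rewrite edu in_cnbh (negbTE ntu) /= => hut.
    by rewrite /privo /priv in_setI in_setD hn /= in_cnbh hut orbT /onbh inE.
  case/cnbhSP: (Xmax htp) => p hp htp'.
  by apply/cnbhSP; exists p => //; rewrite inD' hp orbT.
by apply/cnbhSP; exists d => //; rewrite inD' !inE ndu hd.
Qed.

Lemma selfpriv (S : {set 'I_n}) p : S \subset Dprime e D u v -> p \in v |: Xuv e D u v ->
  p \notin cnbhS e (S :\ p).
Proof.
move=> hS hp; apply/negP => /cnbhSP [t /setD1P [ntp htS] hpt].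
move: (subsetP hS t htS); rewrite inD' => /orP [htD|htP].
  by move: (privoP (Pprivo hp) htD) hpt; rewrite in_cnbh; case: (p == t); case: (e t p).
case: XinvX => _ hi.
move: hpt; rewrite in_cnbh eq_sym (negbTE ntp) /= => het.
by move: (hi t p htP hp); rewrite het.
Qed.

Definition Gin (S : {set 'I_n}) := [/\ S \subset Dprime e D u v, dominating e S
  & v |: Xuv e D u v \subset S].

Lemma grstep_inv (S : {set 'I_n}) : Gin S -> Gin (grstep e S).
Proof.
move=> [h1 h2 h3]; rewrite /grstep; case: ifP => _; first by split.
case E: minv => [y|]; last by split.
have := minv_in E; rewrite inE => /andP[hyS hdom].
split => //.
- exact: subset_trans (subsetDl _ _) h1.
apply/subsetP => p hp; rewrite in_setD1 (subsetP h3 p hp) andbT.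
apply/eqP => epy; subst y.
by move: (selfpriv h1 hp); rewrite (domP hdom).
Qed.

Lemma Gin_iter k : Gin (iter k (grstep e) (Dprime e D u v)).
Proof.
elim: k => [|k IH]; last exact: grstep_inv.
split; [exact: subxx | exact: D'dom |].
by apply/subsetP => p hp; rewrite inD' hp orbT.
Qed.

Lemma Gin_Ds : Gin (Dstar e D u v).
Proof. exact: Gin_iter. Qed.

End Aux.

Theorem lemma3 (n : nat) (e : rel 'I_n)
  (e_sym : symmetric e) (e_irr : irreflexive e)
  (D : {set 'I_n}) (u w v : 'I_n)
  (hD : minimal_dominating e D)
  (hu : u \in D) (hw : w \in D) (huw : e u w)
  (hv : v \in privo e D u) :
  let X := Xuv e D u v in
  let Ds := Dstar e D u v in
  let Z := Zuv e D u v in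
  (forall z, z \in Z ->
     [/\ z \notin cnbhS e (v |: X),
         exists2 y, y \in Ds :\: (v |: X) & e z y
       & exists x, [/\ x \in cnbhS e (v |: X) :\: cnbh e u, e z x
                     & x \notin cnbhS e (Ds :\: (v |: X))]])
  /\
  (forall x, x \in cnbhS e (v |: X) :\: cnbh e u ->
     x \notin cnbhS e (Ds :\: (v |: X)) ->
     exists2 z, z \in Z & e z x).
Proof.
move=> X Ds Z.
have [hDs1 hDs2 hDs3] := Gin_Ds e_sym e_irr hD hv.
rewrite -/X -/Ds in hDs1 hDs2 hDs3.
have notP t p : t \in D :\ u -> p \in v |: X -> (p != t) && ~~ e t p.
  by move=> ht hp; apply: privoP ht; apply: Pprivo hp.
have outNP t : t \in D :\ u -> t \notin cnbhS e (v |: X).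
  move=> ht; apply/negP => /cnbhSP [p hp htp].
  move: (notP t p ht hp); rewrite in_cnbh e_sym in htp.
  by rewrite eq_sym; case/orP: htp => ->; rewrite ?andbF.
split.
  move=> z; rewrite /Z /Zuv -/Ds inE => /andP [hzDs hzD'].
  have hzD : z \in D :\ u.
    move: hzD'; rewrite inD' => /orP [//|hzP].
    by move: hzDs; rewrite (subsetP hDs3 z hzP).
  have h1 := outNP z hzD.
  split => //.
  - case/cnbhSP: (domP hDs2 z) => y hy hzy.
    have nzy : z != y by apply: contra hzDs => /eqP ->.
    move: hzy; rewrite in_cnbh (negbTE nzy) /= => hyz.
    exists y; last by rewrite e_sym.
    rewrite inE hy andbT; apply: contra h1 => hyP; apply/cnbhSP; exists y => //.
    by rewrite in_cnbh hyz orbT.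
  - case: hD => hDd hmin.
    have hzD0 : z \in D by move: hzD; rewrite in_setD1 => /andP[].
    have hpr : D :\ z \proper D by rewrite properD1.
    move: (hmin _ hpr); rewrite /dominating => /eqP hnd.
    have [p hp] : exists p, p \notin cnbhS e (D :\ z).
      case: (boolP [exists p, p \notin cnbhS e (D :\ z)]) => [/existsP //|/existsPn hall].
      exfalso; apply: hnd.
      by apply/setP => t; rewrite inE; move: (hall t); rewrite negbK.
    have hpz : p \in cnbh e z.
      case/cnbhSP: (domP hDd p) => d hd hpd.
      case: (eqVneq d z) => [<- //|ndz].
      by move: hp; apply: contraNT => _; apply/cnbhSP; exists d => //; rewrite in_setD1 ndz hd.
    have hnz : z != u by move: hzD; rewrite in_setD1 => /andP[].
    have sub t : t \in Ds :\: (v |: X) -> t \in D :\ z.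
      rewrite inE => /andP [htP htDs].
      move: (subsetP hDs1 t htDs); rewrite inD' (negbTE htP) orbF.
      rewrite !inE => /andP [_ htD]; rewrite htD andbT.
      by apply: contra hzDs => /eqP <-.
    have hpP : p \in cnbhS e (v |: X).
      case/cnbhSP: (domP hDs2 p) => y hy hpy.
      case: (boolP (y \in v |: X)) => hyP; first by apply/cnbhSP; exists y.
      by move: hp; apply: contraNT => _; apply/cnbhSP; exists y => //; apply: sub; rewrite inE hyP.
    exists p; split.
    + rewrite inE hpP andbT; apply: contra hp => hpu; apply/cnbhSP; exists u => //.
      by rewrite in_setD1 eq_sym hnz hu.
    + have npz : p != z by apply: contra h1 => /eqP <-.
      by move: hpz; rewrite in_cnbh (negbTE npz).
    + apply: contra hp => /cnbhSP [t ht hpt]; apply/cnbhSP; exists t => //.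
      exact: sub.
move=> x; rewrite inE => /andP [hxu hxP] hxn.
case: hD => hDd _.
case/cnbhSP: (domP hDd x) => d hd hxd.
have ndu : d != u by apply: contra hxu => /eqP <-.
have hdD : d \in D :\ u by rewrite in_setD1 ndu hd.
have nxd : x != d.
  apply/negP => /eqP exd; move: (outNP d hdD); rewrite -exd hxP //.
have hdx : e d x by move: hxd; rewrite in_cnbh (negbTE nxd).
exists d; last by [].
rewrite /Z /Zuv -/Ds in_setD inD' hdD andbT.
apply/negP => hdDs; move: hxn; apply/negP; rewrite negbK.
apply/cnbhSP; exists d => //.
rewrite inE hdDs andbT; apply/negP => hdP.
move: (outNP d hdD); apply/negP; rewrite negbK; apply/cnbhSP; exists d => //.
by rewrite in_cnbh eqxx.
Qed.
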